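(* Let $V$ be a finite-dimensional vector space over a field of characteristic zero, and let $A^{a_1\dots a_p}$ and $B_{a_1\dots a_p}$ be $p$-forms (totally antisymmetric tensors, $A$ contravariant and $B$ covariant), with $A$ simple. Let $P^a{}_b=A^{ac_2\dots c_p}B_{bc_2\dots c_p}$. Then $$P\Bigl(P-\frac{1}{p}[P]\Bigr)=0.$$
   Context: Index-free notation for $(1,1)$-tensors: $P$ denotes $P^a{}_b$, products denote composition (e.g. $P^2=P^a{}_cP^c{}_b$), $[P]=P^c{}_c$ is the trace, and a scalar term in a tensor equation is understood as multiplied by the identity $\delta^a_b$. A $p$-form $A$ is simple if $A^{a_1\dots a_p}=u^{[a_1}\cdots w^{a_p]}$ for some vectors $u,\dots,w$, where square brackets denote antisymmetrisation. No metric is assumed. *)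

(* Defs.v *)
From HB Require Import structures.
From mathcomp Require Import all_boot all_order all_fingroup all_algebra.
Set Implicit Arguments. Unset Strict Implicit. Unset Printing Implicit Defensive.
Import GRing.Theory.
Local Open Scope ring_scope.

(* V = K^n with its standard basis; a rank-p tensor (contravariant or
   covariant) is given by its components, indexed by p-tuples of indices
   in 'I_n. *)
Definition tensor (K : fieldType) (n p : nat) := {ffun {ffun 'I_p -> 'I_n} -> K}.

Definition antisym (K : fieldType) (n p : nat) (T : tensor K n p) : Prop :=
  forall (s : 'S_p) (f : {ffun 'I_p -> 'I_n}),
    T [ffun i => f (s i)] = (-1) ^+ s * T f.

Definition wedge (K : fieldType) (n p : nat) (u : 'I_p -> 'I_n -> K) : tensor K n p :=
  [ffun f : {ffun 'I_p -> 'I_n} => (p`!)%:R^-1 *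
     \sum_(s : 'S_p) (-1) ^+ s * \prod_(i < p) u i (f (s i))].

Definition simple_form (K : fieldType) (n p : nat) (A : tensor K n p) : Prop :=
  exists u : 'I_p -> 'I_n -> K, A = wedge u.

Definition icons (n p : nat) (a : 'I_n) (c : {ffun 'I_p -> 'I_n}) : {ffun 'I_p.+1 -> 'I_n} :=
  [ffun i => if unlift ord0 i is Some j then c j else a].

Definition contrP (K : fieldType) (n p : nat) (A B : tensor K n p.+1) : 'M[K]_n :=
  \matrix_(a, b) \sum_(c : {ffun 'I_p -> 'I_n}) A (icons a c) * B (icons b c).

(* Main.v *)
Require Import Defs.
From HB Require Import structures.
From mathcomp Require Import all_boot all_order all_fingroup all_algebra.
From mathcomp Require Import ring.
Import GRing.Theory.
Local Open Scope ring_scope.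

Lemma icons0 n p (a : 'I_n) (c : {ffun 'I_p -> 'I_n}) : icons a c ord0 = a.
Proof. by rewrite /icons ffunE unlift_none. Qed.

Lemma iconsS n p (a a' : 'I_n) (c : {ffun 'I_p -> 'I_n}) i :
  i != ord0 -> icons a c i = icons a' c i.
Proof. by rewrite /icons !ffunE; case: unliftP => [j _|->] //; rewrite eqxx. Qed.

Lemma sum_icons (K : fieldType) n p (F : {ffun 'I_p.+1 -> 'I_n} -> K) :
  \sum_(a : 'I_n) \sum_(c : {ffun 'I_p -> 'I_n}) F (icons a c) = \sum_f F f.
Proof.
rewrite pair_big /=.
rewrite (reindex (fun x : 'I_n * {ffun 'I_p -> 'I_n} => icons x.1 x.2)) //=.
apply: onW_bij.
exists (fun f : {ffun 'I_p.+1 -> 'I_n} => (f ord0, [ffun j => f (lift ord0 j)])).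
  move=> [a c] /=; rewrite icons0; congr (_, _); apply/ffunP => j.
  by rewrite !ffunE liftK.
move=> f; apply/ffunP => i; rewrite /icons !ffunE.
by case: unliftP => [j ->|->] //; rewrite ffunE.
Qed.

Definition Cv {K : fieldType} {n p} (B : tensor K n p) (v : 'I_p -> 'I_n -> K) :=
  \sum_(h : {ffun 'I_p -> 'I_n}) (\prod_i v i (h i)) * B h.

Lemma Cv_alt (K : fieldType) n p (B : tensor K n p) (v : 'I_p -> 'I_n -> K) j k :
  antisym B -> (2%:R : K) != 0 -> j != k -> (forall x, v j x = v k x) -> Cv B v = 0.
Proof.
move=> hB h2 jk vjk.
set t := tperm j k.
have inj : injective (fun h : {ffun 'I_p -> 'I_n} => [ffun i => h (t i)]).
  move=> h1 h2' /ffunP E; apply/ffunP => i; have := E (t i).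
  by rewrite !ffunE tpermK.
have E : Cv B v = - Cv B v.
  rewrite {1}/Cv (reindex_inj inj) /Cv -sumrN; apply: eq_bigr => h _ /=.
  rewrite hB odd_tperm jk expr1 mulN1r -mulrN; congr (_ * _).
  rewrite (reindex_inj (@perm_inj _ t)) /=; apply: eq_bigr => i _.
  rewrite ffunE tpermK /t; case: tpermP => [->|->|] //.
move/eqP: E; rewrite -subr_eq0 opprK -mulr2n -mulr_natr mulf_eq0 (negbTE h2) orbF.
by move/eqP.
Qed.

Lemma Cv_perm (K : fieldType) n p (B : tensor K n p) (v : 'I_p -> 'I_n -> K) (s : 'S_p) :
  antisym B -> \sum_(f : {ffun 'I_p -> 'I_n}) (\prod_i v i (f (s i))) * B f = (-1) ^+ s * Cv B v.
Proof.
move=> hB.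
have inj : injective (fun h : {ffun 'I_p -> 'I_n} => [ffun x => h ((s^-1)%g x)]).
  move=> h1 h2 /ffunP E; apply/ffunP => i; have := E (s i).
  by rewrite !ffunE permK.
rewrite (reindex_inj inj) /Cv mulr_sumr; apply: eq_bigr => h _ /=.
rewrite hB odd_permV mulrCA; congr (_ * (_ * _)).
by apply: eq_bigr => i _; rewrite ffunE permK.
Qed.

Lemma prod_split (K : fieldType) n p (u : 'I_p.+1 -> 'I_n -> K) (s : 'S_p.+1) k
  (a b : 'I_n) (c : {ffun 'I_p -> 'I_n}) : s k = ord0 ->
  \prod_i u i (icons a c (s i)) =
  u k a * \prod_i (if i == k then 1 else u i (icons b c (s i))).
Proof.
move=> hsk.
rewrite (bigD1 k) //= [X in _ = _ * X](bigD1 k) //= eqxx mul1r hsk icons0; congr (_ * _).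
apply: eq_bigr => i ik; rewrite (negbTE ik); congr (u i _); apply: iconsS.
by rewrite -hsk (inj_eq perm_inj).
Qed.

Theorem lemma1 (K : fieldType) (hK : [pchar K] =i pred0) (n p : nat)
  (A B : tensor K n p.+1) (hA : antisym A) (hB : antisym B) (hAs : simple_form A) :
  let P := contrP A B in
  P *m (P - ((p.+1)%:R^-1 * \tr P)%:M) = 0.
Proof.
move=> P; case: hAs => u hu.
have hK' := (pcharf0P K).1 hK.
have hq : (p.+1)%:R != 0 :> K by rewrite hK'.
have hf : (p.+1)`!%:R != 0 :> K by rewrite hK' -lt0n fact_gt0.
have h2 : 2%:R != 0 :> K by rewrite hK'.
pose R (s : 'S_p.+1) (k : 'I_p.+1) (b : 'I_n) :=
  \sum_(c : {ffun 'I_p -> 'I_n})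
     (\prod_i (if i == k then 1 else u i (icons b c (s i)))) * B (icons b c).
pose W k b := ((p.+1)`!%:R)^-1 * \sum_(s : 'S_p.+1 | s k == ord0) (-1) ^+ s * R s k b.
pose N (k : 'I_p.+1) := \sum_(s : 'S_p.+1 | s k == ord0) (1 : K).
pose beta := Cv B u.
have pred1E : forall s : 'S_p.+1, (fun k => true && (s k == ord0)) =1 pred1 ((s^-1)%g ord0).
  move=> s k /=; rewrite -{1}(permKV s ord0) (inj_eq perm_inj) //.
have step1 : forall a b, P a b = \sum_k u k a * W k b.
  move=> a b; rewrite /P /contrP mxE hu.
  transitivity (((p.+1)`!%:R)^-1 * \sum_(s : 'S_p.+1) (-1) ^+ s *
     \sum_(c : {ffun 'I_p -> 'I_n}) (\prod_i u i (icons a c (s i))) * B (icons b c)).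
    rewrite (eq_bigr (fun c => ((p.+1)`!%:R)^-1 * \sum_(s : 'S_p.+1) (-1) ^+ s *
       ((\prod_i u i (icons a c (s i))) * B (icons b c)))); last first.
      move=> c _; rewrite ffunE -mulrA mulr_suml; congr (_ * _).
      by apply: eq_bigr => s _; rewrite mulrA.
    rewrite -mulr_sumr exchange_big; congr (_ * _); apply: eq_bigr => s _.
    by rewrite mulr_sumr.
  rewrite /W.
  rewrite (eq_bigr (fun k => ((p.+1)`!%:R)^-1 *
     \sum_(s : 'S_p.+1 | s k == ord0) u k a * ((-1) ^+ s * R s k b))); last first.
    by move=> k _; rewrite mulrCA mulr_sumr.
  rewrite -mulr_sumr; congr (_ * _).
  rewrite (exchange_big_dep predT) //=; apply: eq_bigr => s _.
  rewrite (big_pred1 _ (pred1E s)) mulrCA; congr (_ * _).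
  rewrite /R mulr_sumr; apply: eq_bigr => c _; rewrite mulrA; congr (_ * _).
  by apply: prod_split; rewrite permKV.
have key : forall k j, \sum_b W k b * u j b
    = (((p.+1)`!%:R)^-1 * N k) * (if j == k then beta else 0).
  move=> k j; rewrite /W.
  under eq_bigr do rewrite -mulrA mulr_suml.
  rewrite -mulr_sumr -mulrA; congr (_ * _).
  rewrite exchange_big /N mulr_suml; apply: eq_bigr => s hs; rewrite mul1r.
  pose v := fun i => if i == k then u j else u i.
  transitivity ((-1) ^+ s * \sum_(f : {ffun 'I_p.+1 -> 'I_n})
      (\prod_i v i (f (s i))) * B f).
    rewrite mulr_sumr -sum_icons; apply: eq_bigr => b _.
    rewrite -mulrA /R mulr_suml mulr_sumr; apply: eq_bigr => c _.
    congr (_ * _); rewrite mulrAC; congr (_ * _).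
    rewrite (bigD1 k) //= [RHS](bigD1 k) //= eqxx mul1r /v eqxx (eqP hs) icons0 mulrC.
    congr (_ * _); apply: eq_bigr => i ik; by rewrite (negbTE ik).
  rewrite Cv_perm // mulrA -signr_addb addbb expr0 mul1r.
  case: (eqVneq j k) => [ejk|jk].
    rewrite /Cv; apply: eq_bigr => h _; congr (_ * _); apply: eq_bigr => i _.
    by rewrite /v; case: eqP => [->|]; rewrite ?ejk.
  apply: (@Cv_alt K n p.+1 B v j k) => // x.
  by rewrite /v (negbTE jk) eqxx.
have NE : forall k, N k = N ord0.
  move=> k; rewrite /N (reindex_inj (mulgI (tperm k ord0))) /=.
  by apply: eq_bigl => s; rewrite permM tpermL.
have sumN : \sum_k N k = (p.+1)`!%:R.
  rewrite /N (exchange_big_dep predT) //=.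
  under eq_bigr do rewrite (big_pred1 _ (pred1E _)).
  by rewrite sumr_const card_Sn.
have step3 : forall k, ((p.+1)`!%:R)^-1 * N k = (p.+1)%:R^-1 :> K.
  move=> k; rewrite NE.
  have E : N ord0 * (p.+1)%:R = (p.+1)`!%:R.
    by rewrite -sumN (eq_bigr _ (fun k _ => NE k)) sumr_const card_ord mulr_natr.
  have N0 : N ord0 != 0.
    by apply: contraNneq hf => h0; rewrite -E h0 mul0r.
  rewrite -E; field.
  by rewrite addrC natr1 hq N0.
have key' : forall k j, \sum_b W k b * u j b
    = (p.+1)%:R^-1 * (if j == k then beta else 0).
  by move=> k j; rewrite key step3.
have step4 : \tr P = beta.
  rewrite /mxtrace (eq_bigr _ (fun a _ => step1 a a)) exchange_big /=.
  rewrite (eq_bigr (fun k => (p.+1)%:R^-1 * beta)); last first.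
    move=> k _; have := key' k k; rewrite eqxx => <-; apply: eq_bigr => a _; exact: mulrC.
  rewrite sumr_const card_ord -mulr_natr; field.
  by rewrite addrC natr1 hq.
rewrite mulmxBr mul_mx_scalar step4; apply/matrixP => a d; rewrite !mxE.
apply/eqP; rewrite subr_eq0; apply/eqP.
rewrite (eq_bigr (fun b => \sum_k \sum_j (u k a * W j d) * (W k b * u j b))); last first.
  move=> b _; rewrite !step1 mulr_suml; apply: eq_bigr => k _.
  rewrite mulr_sumr; apply: eq_bigr => j _; ring.
rewrite exchange_big.
have step1' : forall a b, \sum_(c : {ffun 'I_p -> 'I_n}) A (icons a c) * B (icons b c) = \sum_k u k a * W k b.
  by move=> a0 b0; rewrite -step1 /P /contrP mxE.
rewrite step1' mulr_sumr; apply: eq_bigr => k _.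
rewrite exchange_big /=.
rewrite (eq_bigr (fun j => (u k a * W j d) * ((p.+1)%:R^-1 * (if j == k then beta else 0))));
  last by move=> j _; rewrite -mulr_sumr key'.
rewrite (bigD1 k) //= big1; last by move=> j jk; rewrite (negbTE jk) !mulr0.
rewrite eqxx addr0; ring.
Qed.
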